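(* For $n\in\mathbb{N}$ let $a_n,b_n,c_n,d_n$ be real random variables with $c_n\ge0$, $d_n\ge0$ a.s., and let $(k_n)$ be a deterministic integer sequence with $k_n\to\infty$. Define $X_n=e^{ia_n-c_n}$, $x_n=\mathbb{E}[X_n]$, $Y_n=e^{ib_n-d_n}$, $y_n=\mathbb{E}[Y_n]$, $z_n=\mathbb{E}[X_nY_n]$. If $x_n-1=O(1/k_n)$, $y_n-1=o(1/k_n)$ and $z_n-1=O(1/k_n)$ as $n\to\infty$, then $z_n^{k_n}-x_n^{k_n}=o(1)$. *)

(* Defs.v *)
From HB Require Import structures.
From mathcomp Require Import all_boot all_order all_algebra.
From mathcomp Require Import all_classical all_reals all_analysis.
From mathcomp Require Import complex.
Set Implicit Arguments. Unset Strict Implicit. Unset Printing Implicit Defensive.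
Import Order.TTheory GRing.Theory Num.Theory ComplexField.
Local Open Scope classical_set_scope.
Local Open Scope complex_scope.
Local Open Scope ring_scope.

(* Expectation of a complex-valued random variable:
   E[X] = E[Re X] + i E[Im X] (both parts bounded in our use, hence finite). *)
Definition cexpect d (T : measurableType d) (R : realType)
  (P : probability T R) (X : T -> R[i]) : R[i] :=
  Complex (fine ('E_P[fun w => complex.Re (X w)])%E)  
  (fine ('E_P[fun w => complex.Im (X w)])%E).

(* e^{i a - c} for real a, c, written out: e^{-c} (cos a + i sin a). *)
Definition cexpi (R : realType) (a c : R) : R[i] :=
  Complex (expR (- c) * cos a)  (expR (- c) * sin a).

Definition bigO_seq (R : realType) (u : nat -> R[i]) (v : nat -> R) : Prop :=
  exists C : R, \forall n \near \oo, `|u n| <= C%:C * `|(v n)%:C|.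

Definition littleo_seq (R : realType) (u : nat -> R[i]) (v : nat -> R) : Prop :=
  forall eps : R, 0 < eps -> \forall n \near \oo, `|u n| <= eps%:C * `|(v n)%:C|.

(* Main.v *)
Require Import Defs.
From HB Require Import structures.
From mathcomp Require Import all_boot all_order all_algebra.
From mathcomp Require Import all_classical all_reals all_analysis.
From mathcomp Require Import complex.
From mathcomp Require Import ring lra.
Set Implicit Arguments. Unset Strict Implicit. Unset Printing Implicit Defensive.
Import Order.TTheory GRing.Theory Num.Theory ComplexField.
Local Open Scope classical_set_scope.
Local Open Scope ring_scope.
Local Open Scope complex_scope.
Lemma powdiff (K : numDomainType) (u v : K) (m : nat) :
  `|u| <= 1 -> `|v| <= 1 -> `|u ^+ m - v ^+ m| <= m%:R * `|u - v|.
Proof.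
move=> hu hv; rewrite subrXX normrM mulrC ler_wpM2r //.
apply: (le_trans (ler_norm_sum _ _ _)).
rewrite -[m in m%:R]card_ord -sum1_card natr_sum.
apply: ler_sum => i _; rewrite normrM !normrX.
by rewrite mulr_ile1 ?exprn_ile1 ?exprn_ge0.
Qed.

Lemma normCr (R : realType) (r : R) : `|r%:C| = `|r|%:C.
Proof. by rewrite normc_def /= expr0n addr0 sqrtr_sqr. Qed.

Lemma normC_sqrt (R : realType) (a b : R) :
  `|(a +i* b)%C| = (Num.sqrt (a ^+ 2 + b ^+ 2))%:C.
Proof. by rewrite normc_def. Qed.

Lemma sqrt_le_abs (R : realType) (a b : R) :
  Num.sqrt (a ^+ 2 + b ^+ 2) <= `|a| + `|b|.
Proof.
rewrite -[X in _ <= X]ger0_norm ?addr_ge0 // -sqrtr_sqr ler_sqrt ?sqr_ge0 //.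
rewrite sqrrD !real_normK ?num_real //.
have : 0 <= `|a| * `|b| by [].
lra.
Qed.

Lemma abs_le_sqrt (R : realType) (a b : R) :
  `|a| <= Num.sqrt (a ^+ 2 + b ^+ 2).
Proof.
rewrite -sqrtr_sqr ler_sqrt ?addr_ge0 ?sqr_ge0 //.
by rewrite lerDl sqr_ge0.
Qed.
Definition good d (T : measurableType d) (R : realType) (f : T -> R) :=
  measurable_fun setT f /\ exists M : R, forall w, `|f w| <= M.

Lemma goodD d (T : measurableType d) (R : realType) (f g : T -> R) :
  good f -> good g -> good (fun w => f w + g w).
Proof.
move=> [mf [M hM]] [mg [N hN]]; split; first exact: measurable_realfun.measurable_funD.
exists (M + N) => w; apply: (le_trans (ler_normD _ _)); exact: lerD.
Qed.

Lemma goodM d (T : measurableType d) (R : realType) (f g : T -> R) :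
  good f -> good g -> good (fun w => f w * g w).
Proof.
move=> [mf [M hM]] [mg [N hN]]; split; first exact: measurable_realfun.measurable_funM.
exists (M * N) => w; rewrite normrM; apply: ler_pM => //.
Qed.

Lemma goodN d (T : measurableType d) (R : realType) (f : T -> R) :
  good f -> good (fun w => - f w).
Proof.
move=> [mf [M hM]]; split; first exact: measurableT_comp.
by exists M => w; rewrite normrN.
Qed.

Lemma goodB d (T : measurableType d) (R : realType) (f g : T -> R) :
  good f -> good g -> good (fun w => f w - g w).
Proof. by move=> hf hg; apply: goodD => //; apply: goodN. Qed.

Lemma goodC d (T : measurableType d) (R : realType) (r : R) :
  good (fun _ : T => r).
Proof. by split; [exact: measurable_cst | exists `|r|]. Qed.

Lemma good_int d (T : measurableType d) (R : realType) (P : probability T R)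
  (f : T -> R) : good f -> P.-integrable setT (EFin \o f).
Proof.
move=> [mf [M hM]]; apply: measurable_bounded_integrable => //.
  by apply: (le_lt_trans (probability_le1 P measurableT)); rewrite ltry.
exists M; split; first exact: num_real.
by move=> N MN w _ /=; apply: (le_trans (hM w)); apply: ltW.
Qed.

Definition EE d (T : measurableType d) (R : realType) (P : probability T R)
  (f : T -> R) : R := \int[P]_(w in setT) f w.

Lemma EED d (T : measurableType d) (R : realType) (P : probability T R)
  (f g : T -> R) : good f -> good g ->
  EE P (fun w => f w + g w) = EE P f + EE P g.
Proof. by move=> hf hg; apply: RintegralD => //; apply: good_int. Qed.

Lemma EEB d (T : measurableType d) (R : realType) (P : probability T R)
  (f g : T -> R) : good f -> good g ->
  EE P (fun w => f w - g w) = EE P f - EE P g.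
Proof. by move=> hf hg; apply: RintegralB => //; apply: good_int. Qed.

Lemma EEZ d (T : measurableType d) (R : realType) (P : probability T R)
  (f : T -> R) (r : R) : good f ->
  EE P (fun w => r * f w) = r * EE P f.
Proof. by move=> hf; apply: RintegralZl => //; apply: good_int. Qed.

Lemma EEC d (T : measurableType d) (R : realType) (P : probability T R)
  (r : R) : EE P (fun _ => r) = r.
Proof.
rewrite /EE Rintegral_cst // -[RHS]mulr1; congr (_ * _).
by rewrite -[RHS]/(fine 1%E); congr fine; exact: probability_setT.
Qed.

Lemma EEle d (T : measurableType d) (R : realType) (P : probability T R)
  (f g : T -> R) : good f -> good g -> (forall w, f w <= g w) ->
  EE P f <= EE P g.
Proof. by move=> hf hg fg; apply: le_Rintegral => //; apply: good_int. Qed.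

Lemma EEabs d (T : measurableType d) (R : realType) (P : probability T R)
  (f g : T -> R) : good f -> good g -> (forall w, `|f w| <= g w) ->
  `|EE P f| <= EE P g.
Proof.
move=> hf hg fg; rewrite ler_norml; apply/andP; split.
  rewrite -mulN1r -(EEZ _ _ hg); apply: EEle.
  - by apply: goodM; [exact: goodC|].
  - done.
  - by move=> w; rewrite mulN1r lerNl; apply: le_trans (fg w); rewrite -normrN ler_norm.
by apply: EEle => // w; apply: le_trans (fg w); exact: ler_norm.
Qed.

Lemma expE d (T : measurableType d) (R : realType) (P : probability T R)
  (f : T -> R) : fine ('E_P[f])%E = EE P f.
Proof. by rewrite unlock. Qed.

Lemma expae d (T : measurableType d) (R : realType) (P : probability T R)
  (f g : T -> R) : measurable_fun setT f -> measurable_fun setT g ->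
  {ae P, forall w, f w = g w} -> ('E_P[f] = 'E_P[g])%E.
Proof.
move=> mf mg h; rewrite unlock; apply: ae_eq_integral => //.
- exact/measurable_realfun.measurable_EFinP.
- exact/measurable_realfun.measurable_EFinP.
- by apply: filterS h => w /= ->.
Qed.
Lemma maxge0 (R : realType) (u : R) : 0 <= Order.max u 0.
Proof. by rewrite maxElt; case: ltP => // /ltW. Qed.

Lemma maxeq (R : realType) (u : R) : 0 <= u -> Order.max u 0 = u.
Proof. by move=> h; rewrite maxElt ltNge h. Qed.

Lemma good_trig d (T : measurableType d) (R : realType) (a c : T -> R)
  (f : R -> R) : measurable_fun setT a -> measurable_fun setT c ->
  measurable_fun setT f -> (forall t, `|f t| <= 1) ->
  good (fun w => expR (- Order.max (c w) 0) * f (a w)).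
Proof.
move=> ma mc cf f1; split.
  apply: measurable_realfun.measurable_funM.
    apply: measurableT_comp; first exact: measurable_realfun.measurable_expR.
    apply: measurableT_comp => //.
    exact: measurable_realfun.measurable_maxr.
  exact: measurableT_comp.
exists 1 => w; rewrite normrM ger0_norm ?expR_ge0 //.
rewrite mulr_ile1 ?expR_ge0 // expR_le1 oppr_le0; exact: maxge0.
Qed.

Lemma meas_trig d (T : measurableType d) (R : realType) (a c : T -> R)
  (f : R -> R) : measurable_fun setT a -> measurable_fun setT c ->
  measurable_fun setT f -> measurable_fun setT (fun w => expR (- c w) * f (a w)).
Proof.
move=> ma mc cf.
apply: measurable_realfun.measurable_funM.
  apply: measurableT_comp; first exact: measurable_realfun.measurable_expR.
  exact: measurableT_comp.
exact: measurableT_comp.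
Qed.

Lemma sq_le1 (R : realType) (u t : R) : 0 <= u ->
  (expR (- u) * cos t) ^+ 2 + (expR (- u) * sin t) ^+ 2 <= 1.
Proof.
move=> u0; rewrite !exprMn -mulrDr cos2Dsin2 mulr1 -(expr1n _ 2).
rewrite ler_pXn2r ?nnegrE ?expR_ge0 // expR_le1 oppr_le0 //.
Qed.
Lemma ptw_aux (R : realType) (δ a1 a2 b1 b2 : R) : 0 < δ ->
  a1 ^+ 2 + a2 ^+ 2 <= 2 * (- a1) -> b1 ^+ 2 + b2 ^+ 2 <= 2 * (- b1) ->
  `|a1 * b1 - a2 * b2| <= δ * (- a1) + δ^-1 * (- b1) /\
  `|a1 * b2 + a2 * b1| <= δ * (- a1) + δ^-1 * (- b1).
Proof.
move=> d0 ha hb.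
have key : forall u : R, δ * `|u| <= δ ^+ 2 * (- a1) + (- b1) ->
    `|u| <= δ * (- a1) + δ^-1 * (- b1).
  move=> u h; rewrite -(ler_pM2l d0) mulrDr mulrA mulrA mulfV ?gt_eqF //.
  by rewrite mul1r -expr2.
split; apply: key; rewrite -{1}(gtr0_norm d0) -normrM ler_norml; apply/andP; split.
- have := sqr_ge0 (δ * a1 + b1); have := sqr_ge0 (δ * a2 - b2). nra.
- have := sqr_ge0 (δ * a1 - b1); have := sqr_ge0 (δ * a2 + b2). nra.
- have := sqr_ge0 (δ * a1 + b2); have := sqr_ge0 (δ * a2 + b1). nra.
- have := sqr_ge0 (δ * a1 - b2); have := sqr_ge0 (δ * a2 - b1). nra.
Qed.

Lemma stepA d (T : measurableType d) (R : realType) (P : probability T R)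
  (p q : T -> R) : good p -> good q -> (forall w, p w ^+ 2 + q w ^+ 2 <= 1) ->
  Num.sqrt (EE P p ^+ 2 + EE P q ^+ 2) <= 1.
Proof.
move=> gp gq h.
set X1 := EE P p; set X2 := EE P q.
have e : EE P (fun w => X1 * p w + X2 * q w) = X1 ^+ 2 + X2 ^+ 2.
  rewrite EED ?EEZ //.
  - by apply: goodM => //; exact: goodC.
  - by apply: goodM => //; exact: goodC.
have le : EE P (fun w => X1 * p w + X2 * q w) <= EE P (fun _ => (X1 ^+ 2 + X2 ^+ 2 + 1) / 2).
  apply: EEle.
  - by apply: goodD; apply: goodM => //; exact: goodC.
  - exact: goodC.
  - move=> w; have := h w; have := sqr_ge0 (X1 - p w); have := sqr_ge0 (X2 - q w).
    lra.
rewrite EEC e in le.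
rewrite -sqrtr1 ler_sqrt //; lra.
Qed.
Lemma EEN d (T : measurableType d) (R : realType) (P : probability T R)
  (f : T -> R) : good f -> EE P (fun w => - f w) = - EE P f.
Proof. by move=> hf; rewrite -mulN1r -EEZ //; congr EE; apply: funext => w; rewrite mulN1r. Qed.

Ltac gd := repeat first [ assumption | apply: goodC | apply: goodD | apply: goodB
   | apply: goodM | apply: goodN ].

Definition Nr (R : realType) (w : R[i]) :=
  Num.sqrt (complex.Re w ^+ 2 + complex.Im w ^+ 2).

Lemma per_n d (T : measurableType d) (R : realType) (P : probability T R)
  (a c b e : T -> R) (ma : measurable_fun setT a) (mc : measurable_fun setT c)
  (mb : measurable_fun setT b) (me : measurable_fun setT e)
  (hc : {ae P, forall w, 0 <= c w}) (he : {ae P, forall w, 0 <= e w}) :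
  let x := cexpect P (fun w => cexpi (a w) (c w)) in
  let y := cexpect P (fun w => cexpi (b w) (e w)) in
  let z := cexpect P (fun w => cexpi (a w) (c w) * cexpi (b w) (e w)) in
  Nr x <= 1 /\ Nr z <= 1 /\ forall δ : R, 0 < δ ->
  Nr (z - x) <= 2 * Nr (y - 1) + 2 * δ * Nr (x - 1) + 2 * δ^-1 * Nr (y - 1).
Proof.
move=> x y z.
have mcos : measurable_fun setT (@cos R) by exact: measurable_realfun.continuous_measurable_fun (@continuous_cos R).
have msin : measurable_fun setT (@sin R) by exact: measurable_realfun.continuous_measurable_fun (@continuous_sin R).
pose p w := expR (- Order.max (c w) 0) * cos (a w).
pose q w := expR (- Order.max (c w) 0) * sin (a w).
pose r w := expR (- Order.max (e w) 0) * cos (b w).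
pose s w := expR (- Order.max (e w) 0) * sin (b w).
have gp : good p := good_trig ma mc mcos (@cos_max R).
have gq : good q := good_trig ma mc msin (@sin_max R).
have gr : good r := good_trig mb me mcos (@cos_max R).
have gs : good s := good_trig mb me msin (@sin_max R).
have pq w : p w ^+ 2 + q w ^+ 2 <= 1 by apply: sq_le1; exact: maxge0.
have rs w : r w ^+ 2 + s w ^+ 2 <= 1 by apply: sq_le1; exact: maxge0.
have hx : x = EE P p +i* EE P q.
  rewrite /x /cexpect -!expE; congr (fine _ +i* fine _); apply: expae.
  - exact: meas_trig ma mc mcos.
  - exact: gp.1.
  - by apply: filterS hc => w /= h; rewrite /p maxeq.
  - exact: meas_trig ma mc msin.
  - exact: gq.1.
  - by apply: filterS hc => w /= h; rewrite /q maxeq.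
have hy : y = EE P r +i* EE P s.
  rewrite /y /cexpect -!expE; congr (fine _ +i* fine _); apply: expae.
  - exact: meas_trig mb me mcos.
  - exact: gr.1.
  - by apply: filterS he => w /= h; rewrite /r maxeq.
  - exact: meas_trig mb me msin.
  - exact: gs.1.
  - by apply: filterS he => w /= h; rewrite /s maxeq.
have hz : z = EE P (fun w => p w * r w - q w * s w) +i* EE P (fun w => p w * s w + q w * r w).
  rewrite /z /cexpect -!expE; congr (fine _ +i* fine _); apply: expae.
  - apply: measurable_realfun.measurable_funB; apply: measurable_realfun.measurable_funM;
     exact: meas_trig.
  - by have [] : good (fun w => p w * r w - q w * s w) by gd.
  - by apply: filterS2 hc he => w /= h1 h2; rewrite /p /q /r /s !maxeq.
  - apply: measurable_realfun.measurable_funD; apply: measurable_realfun.measurable_funM;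
     exact: meas_trig.
  - by have [] : good (fun w => p w * s w + q w * r w) by gd.
  - by apply: filterS2 hc he => w /= h1 h2; rewrite /p /q /r /s !maxeq.
split; first by rewrite hx; exact: stepA.
split.
  rewrite hz; apply: stepA; [gd | gd | move=> w].
  have -> : (p w * r w - q w * s w) ^+ 2 + (p w * s w + q w * r w) ^+ 2 =
    (p w ^+ 2 + q w ^+ 2) * (r w ^+ 2 + s w ^+ 2) by ring.
  by apply: mulr_ile1 => //; apply: addr_ge0; exact: sqr_ge0.
move=> δ d0.
rewrite hx hy hz /Nr /= !oppr0 !addr0.
set X1 := EE P p; set X2 := EE P q; set Y1 := EE P r; set Y2 := EE P s.
set Z1 := EE P _; set Z2 := EE P _.
pose g w := δ * (- (p w - 1)) + δ^-1 * (- (r w - 1)).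
have gg : good g by rewrite /g; gd.
have Eg : EE P g = δ * (- (X1 - 1)) + δ^-1 * (- (Y1 - 1)).
  rewrite /g EED ?EEZ ?EEN ?EEB ?EEC //; gd.
have pw w : `|(p w - 1) * (r w - 1) - q w * s w| <= g w /\ `|(p w - 1) * s w + q w * (r w - 1)| <= g w.
  rewrite /g; apply: ptw_aux => //.
  - by have := pq w; lra.
  - by have := rs w; lra.
have D1 : `|Z1 - X1 - Y1 + 1| <= EE P g.
  have -> : Z1 - X1 - Y1 + 1 = EE P (fun w => (p w - 1) * (r w - 1) - q w * s w).
    have -> : (fun w => (p w - 1) * (r w - 1) - q w * s w) =
      (fun w => ((p w * r w - q w * s w) - p w) - r w + 1).
      by apply: funext => w; ring.
    rewrite (@EED _ _ _ P (fun w => p w * r w - q w * s w - p w - r w) (fun _ => 1)); [|gd|gd].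
    rewrite EEC (@EEB _ _ _ P (fun w => p w * r w - q w * s w - p w) r); [|gd|gd].
    by rewrite (@EEB _ _ _ P (fun w => p w * r w - q w * s w) p) //; gd.
  by apply: EEabs => //; [gd | move=> w; case: (pw w)].
have D2 : `|Z2 - X2 - Y2| <= EE P g.
  have -> : Z2 - X2 - Y2 = EE P (fun w => (p w - 1) * s w + q w * (r w - 1)).
    have -> : (fun w => (p w - 1) * s w + q w * (r w - 1)) =
      (fun w => ((p w * s w + q w * r w) - q w) - s w).
      by apply: funext => w; ring.
    rewrite (@EEB _ _ _ P (fun w => p w * s w + q w * r w - q w) s); [|gd|gd].
    by rewrite (@EEB _ _ _ P (fun w => p w * s w + q w * r w) q) //; gd.
  by apply: EEabs => //; [gd | move=> w; case: (pw w)].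
rewrite Eg in D1 D2.
set Nx := Num.sqrt ((X1 - 1) ^+ 2 + X2 ^+ 2).
set Ny := Num.sqrt ((Y1 - 1) ^+ 2 + Y2 ^+ 2).
have hx1 : `|X1 - 1| <= Nx by exact: abs_le_sqrt.
have hy1 : `|Y1 - 1| <= Ny by exact: abs_le_sqrt.
have hy2 : `|Y2| <= Ny by rewrite /Ny [_ + Y2 ^+ 2]addrC; exact: abs_le_sqrt.
have t1 : δ * (- (X1 - 1)) <= δ * Nx.
  apply: ler_wpM2l; first exact: ltW. apply: le_trans hx1; by rewrite -normrN ler_norm.
have t2 : δ^-1 * (- (Y1 - 1)) <= δ^-1 * Ny.
  apply: ler_wpM2l; first by rewrite invr_ge0 ltW. apply: le_trans hy1; by rewrite -normrN ler_norm.
apply: (le_trans (sqrt_le_abs _ _)).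
have e1 : `|Z1 - X1| <= `|Z1 - X1 - Y1 + 1| + `|Y1 - 1|.
  by have := ler_normD (Z1 - X1 - Y1 + 1) (Y1 - 1); rewrite (_ : _ + (Y1 - 1) = Z1 - X1) //; ring.
have e2 : `|Z2 - X2| <= `|Z2 - X2 - Y2| + `|Y2|.
  by have := ler_normD (Z2 - X2 - Y2) Y2; rewrite (_ : _ + Y2 = Z2 - X2) //; ring.
lra.
Qed.
Lemma fin_real (R : realType) (K A B Nzx c1 c2 u v : R) : 0 <= K ->
  Nzx <= c1 * B + c2 * A -> 0 <= c1 -> 0 <= c2 -> K * B <= u -> K * A <= v ->
  K * Nzx <= c1 * u + c2 * v.
Proof. move=> *; nra. Qed.

Lemma mulCr (R : realType) (a b : R) : (a * b)%:C = a%:C * b%:C.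
Proof. by rewrite rmorphM. Qed.

Theorem lemmaA3 (R : realType) (d : measure_display) (T : measurableType d)
  (P : probability T R) (a b c e : nat -> {RV P >-> R}) (k : nat -> int)
  (hc : forall n, {ae P, forall w, 0 <= c n w})
  (he : forall n, {ae P, forall w, 0 <= e n w})
  (hk : (fun n => (k n)%:~R : R) @ \oo --> +oo) :
  let X := fun n w => cexpi (a n w) (c n w) in
  let Y := fun n w => cexpi (b n w) (e n w) in
  let x := fun n => cexpect P (X n) in
  let y := fun n => cexpect P (Y n) in
  let z := fun n => cexpect P (fun w => X n w * Y n w) in
  bigO_seq (fun n => x n - 1) (fun n => ((k n)%:~R : R)^-1) ->
  littleo_seq (fun n => y n - 1) (fun n => ((k n)%:~R : R)^-1) ->
  bigO_seq (fun n => z n - 1) (fun n => ((k n)%:~R : R)^-1) ->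
  littleo_seq (fun n => z n ^ k n - x n ^ k n) (fun _ => 1).
Proof.
move=> X Y x y z [C hC] hy _ eps eps0.
have hper n := per_n (measurable_funP (a n)) (measurable_funP (c n))
  (measurable_funP (b n)) (measurable_funP (e n)) (hc n) (he n).
have hk1 : \forall n \near \oo, 1 <= ((k n)%:~R : R) by apply: cvgry_ge.
pose C' := `|C| + 1.
have C'0 : 0 < C' by rewrite /C' ltr_wpDl.
pose δ := eps / (4 * C').
have d0 : 0 < δ by rewrite /δ divr_gt0 // mulr_gt0.
pose e' := eps / (4 * (1 + δ^-1)).
have e'0 : 0 < e' by rewrite /e' divr_gt0 // mulr_gt0 // ltr_wpDr ?invr_ge0 ?ltW.
have hY := hy e' e'0.
near=> n.
have h1 : 1 <= ((k n)%:~R : R) by near: n; exact: hk1.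
have h2 : `|x n - 1| <= C%:C * `|(((k n)%:~R : R)^-1)%:C| by near: n; exact: hC.
have h3 : `|y n - 1| <= e'%:C * `|(((k n)%:~R : R)^-1)%:C| by near: n; exact: hY.
case: (hper n) => nx [nz hd].
have hd' := hd δ d0.
have nN (w : R[i]) : `|w| = (Nr w)%:C := normc_def w.
rewrite !normCr in h2 h3 *.
rewrite !nN -!mulCr !lecR normr1 mulr1 in h2 h3 *.
case Ek: (k n) h1 h2 h3 => [m|m] h1 h2 h3; last first.
  have : ((Negz m)%:~R : R) < 0 by rewrite ltrz0.
  move: h1; lra.
have eK : ((Posz m)%:~R : R) = m%:R by [].
rewrite eK in h1 h2 h3.
have ex (u : R[i]) : u ^ (Posz m) = u ^+ m by [].
rewrite !ex.
have hx1 : `|x n| <= 1 by rewrite nN -[X in _ <= X]/((1:R)%:C) lecR.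
have hz1 : `|z n| <= 1 by rewrite nN -[X in _ <= X]/((1:R)%:C) lecR.
have hp := powdiff m hz1 hx1.
have em : (m%:R : R[i]) = (m%:R : R)%:C by rewrite rmorph_nat.
rewrite em !nN -mulCr lecR in hp.
apply: (le_trans hp).
have m0 : 0 < (m%:R : R) by lra.
have ge : 0 <= (m%:R : R)^-1 by rewrite invr_ge0 ltW.
rewrite (ger0_norm ge) in h2 h3.
set A := Nr (x n - 1) in h2 hd'.
set B := Nr (y n - 1) in h3 hd'.
set Nzx := Nr (z n - x n) in hd' *.
have hB : m%:R * B <= e'.
  apply: (le_trans (ler_wpM2l (ltW m0) h3)).
  by rewrite mulrCA mulfV ?gt_eqF // mulr1.
have hA : m%:R * A <= `|C|.
  apply: (le_trans (ler_wpM2l (ltW m0) h2)).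
  rewrite mulrCA mulfV ?gt_eqF // mulr1; exact: ler_norm.
have := @fin_real R m%:R A B Nzx (2 + 2 / δ) (2 * δ) e' `|C| (ltW m0).
have di : 0 < δ^-1 by rewrite invr_gt0.
move=> H; have {H} H := H _ _ _ hB hA.
have H' : m%:R * Nzx <= (2 + 2 / δ) * e' + 2 * δ * `|C|.
  apply: H; lra.
have E1 : (2 + 2 / δ) * e' = eps / 2.
  rewrite /e'; field.
  by apply/andP; split; apply: lt0r_neq0; lra.
have E2 : 2 * δ * C' = eps / 2.
  rewrite /δ; field; apply: lt0r_neq0; lra.
have E3 : 2 * δ * `|C| <= 2 * δ * C'.
  by apply: ler_wpM2l; [lra | rewrite /C'; lra].
lra.
Unshelve. all: by end_near.
Qed.
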